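(* Let $\mathfrak{h}\subset\mathrm{Mat}_{2n+2}(\mathbb{C})$ be a Lie subalgebra (for the commutator bracket) of strictly upper-triangular matrices isomorphic to the Heisenberg Lie algebra $\mathfrak{h}_{2n+1}$, let $t$ span its center, let $\mathfrak{m}$ be the associative subalgebra of $\mathrm{Mat}_{2n+2}(\mathbb{C})$ generated by $\mathfrak{h}$, and let $\mathcal{A}=\mathbb{C}I_{2n+2}\oplus\mathfrak{m}$. If $t\cdot\mathfrak{m}=\mathfrak{m}\cdot t=0$, then $\mathfrak{m}^2\subset C(\mathcal{A})$, the center of $\mathcal{A}$.
   Context: The Heisenberg Lie algebra $\mathfrak{h}_{2n+1}$ is $\mathbb{W}\times\mathbb{C}$, $\mathbb{W}$ a $2n$-dimensional complex vector space with non-degenerate skew-symmetric form $\omega$, with bracket $[(w_1,t_1),(w_2,t_2)]=(0,\omega(w_1,w_2))$; its center $[\mathfrak{h}_{2n+1},\mathfrak{h}_{2n+1}]$ is one-dimensional. $\mathfrak{m}^2$ denotes the span of products of two elements of $\mathfrak{m}$. *)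

(* Defs.v *)
(* Complex numbers: C := R[i] (mathcomp-real-closed) for a
   realType R (i.e. R is the field of real numbers, up to isomorphism). *)
From HB Require Import structures.
From mathcomp Require Import all_boot all_order all_algebra.
From mathcomp Require Import complex reals.
Set Implicit Arguments. Unset Strict Implicit. Unset Printing Implicit Defensive.
Import Order.TTheory GRing.Theory Num.Theory.
Local Open Scope ring_scope.

Section Defs.
Variables (F : fieldType) (N : nat).
Local Notation M := 'M[F]_N.

Definition lie_subalgebra (h : {vspace M}) : Prop :=
  forall x y, x \in h -> y \in h -> x *m y - y *m x \in h.

Definition strictly_upper (h : {vspace M}) : Prop :=
  forall x, x \in h -> forall i j : 'I_N, (j <= i)%N -> x i j = 0.

Definition lie_center (h : {vspace M}) (x : M) : Prop :=
  x \in h /\ forall y, y \in h -> x *m y - y *m x = 0.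

Definition spans_center (h : {vspace M}) (t : M) : Prop :=
  t != 0 /\ lie_center h t /\ forall x, lie_center h x -> x \in <[t]>%VS.

Definition assoc_gen (h : {vspace M}) (x : M) : Prop :=
  forall V : {vspace M}, (h <= V)%VS ->
    (forall y z, y \in V -> z \in V -> y *m z \in V) -> x \in V.

Definition prod_span (S : M -> Prop) (x : M) : Prop :=
  forall V : {vspace M}, (forall y z, S y -> S z -> y *m z \in V) -> x \in V.

Definition unitize (S : M -> Prop) (a : M) : Prop :=
  exists c z, S z /\ a = c%:M + z.

Definition center_of (S : M -> Prop) (x : M) : Prop :=
  S x /\ forall a, S a -> x *m a = a *m x.

End Defs.

(* The Heisenberg Lie algebra h_{2n+1} = W x F with W = F^{2n} (row vectors)
   and non-degenerate skew form omega(w1,w2) = w1 Om w2^T, bracket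
   [(w1,t1),(w2,t2)] = (0, omega(w1,w2)).  [heisenberg_iso n h] says the
   Lie algebra h (bracket = commutator) is isomorphic to it: there is a
   linear bijection phi : W x F -> h preserving brackets. *)
Definition heisenberg_iso (F : fieldType) (N n : nat) (h : {vspace 'M[F]_N}) : Prop :=
  exists (Om : 'M[F]_(n.*2)) (phi : 'rV[F]_(n.*2) -> F -> 'M[F]_N),
    [/\ Om^T = - Om, Om \in unitmx &
       [/\ (forall a w1 t1 w2 t2, phi (a *: w1 + w2) (a * t1 + t2) = a *: phi w1 t1 + phi w2 t2),
        (forall w1 t1 w2 t2, phi w1 t1 = phi w2 t2 -> w1 = w2 /\ t1 = t2),
        (forall w t, phi w t \in h),
        (forall x, x \in h -> exists w t, x = phi w t) &
        (forall w1 t1 w2 t2,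
           phi 0 ((w1 *m Om *m w2^T) 0 0) = phi w1 t1 *m phi w2 t2 - phi w2 t2 *m phi w1 t1)]].

(* Main.v *)
Require Import Defs.
From HB Require Import structures.
From mathcomp Require Import all_boot all_order all_algebra.
From mathcomp Require Import complex reals.
From Stdlib Require Import Classical.
From mathcomp Require Import zify.
Import GRing.Theory Num.Theory.
Local Open Scope ring_scope.

Lemma vspace_of_pred_aux (K : fieldType) (vT : vectType K) (P : vT -> Prop) :
  (forall a x y, P x -> P y -> P (a *: x + y)) ->
  forall k (V : {vspace vT}), (forall x, x \in V -> P x) ->
  (\dim {:vT} - \dim V <= k)%N ->
  exists W : {vspace vT}, forall x, x \in W <-> P x.
Proof.
move=> Hlin.
have step : forall V : {vspace vT}, (forall x, x \in V -> P x) ->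
  (exists W : {vspace vT}, forall x, x \in W <-> P x) \/
  exists V' : {vspace vT}, (forall x, x \in V' -> P x) /\ (\dim V < \dim V')%N.
  move=> V HV.
  case: (classic (forall x, P x -> x \in V)) => [Hall|Hn].
    by left; exists V => x; split; [apply: HV | apply: Hall].
  right; have [x Hx] := not_all_ex_not _ _ Hn.
  have [Px xV] := imply_to_and _ _ Hx.
  exists (V + <[x]>)%VS; split.
    move=> y /memv_addP [u uV [v vx ->]]; case/vlineP: vx => c ->.
    rewrite addrC; apply: Hlin => //; exact: HV.
  rewrite ltnNge; apply/negP => Hle.
  have /eqP EV : V == (V + <[x]>)%VS by rewrite eqEdim Hle andbT addvSl.
  apply: xV; rewrite EV.
  by have := memv_add (mem0v V) (memv_line x); rewrite add0r.
elim=> [|k IH] V HV Hd; (case: (step V HV) => [//|[V' [HV' Hlt]]]);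
  have Hf : (\dim V' <= \dim {:vT})%N by apply: dimvS; apply: subvf.
  by move: Hd Hlt Hf; lia.
apply: (IH V') => //; move: Hd Hlt Hf; lia.
Qed.

Lemma vspace_of_pred (K : fieldType) (vT : vectType K) (P : vT -> Prop) :
  P 0 -> (forall a x y, P x -> P y -> P (a *: x + y)) ->
  exists W : {vspace vT}, forall x, x \in W <-> P x.
Proof.
move=> P0 Hlin; apply: (@vspace_of_pred_aux _ _ _ Hlin (\dim {:vT}) (0%VS)).
  by move=> x; rewrite memv0 => /eqP ->.
by rewrite leq_subr.
Qed.

Section Gen.
Variables (F : fieldType) (N : nat) (h : {vspace 'M[F]_N}).
Local Notation m := (assoc_gen h).

Lemma m0 : m 0.
Proof. by move=> V _ _; exact: mem0v. Qed.

Lemma mlin a x y : m x -> m y -> m (a *: x + y).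
Proof. by move=> mx my V hV cV; apply: memvD; [apply: memvZ|]; [apply: mx|apply: my]. Qed.

Lemma mh x : x \in h -> m x.
Proof. by move=> xh V /subvP hV _; apply: hV. Qed.

Lemma mmul x y : m x -> m y -> m (x *m y).
Proof. by move=> mx my V hV cV; apply: (cV _ _ (mx V hV cV) (my V hV cV)). Qed.

Lemma m_ind (P : 'M[F]_N -> Prop) :
  P 0 -> (forall a x y, P x -> P y -> P (a *: x + y)) ->
  (forall x, x \in h -> P x) ->
  (forall x y, m x -> m y -> P x -> P y -> P (x *m y)) ->
  forall x, m x -> P x.
Proof.
move=> P0 Plin Ph Pmul.
have [V HV] := @vspace_of_pred _ _ (fun x => m x /\ P x)
  (conj m0 P0) (fun a x y Hx Hy => conj (mlin a x y (proj1 Hx) (proj1 Hy)) (Plin a x y (proj2 Hx) (proj2 Hy))).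
move=> x mx; have xV : x \in V.
  apply: mx.
    by apply/subvP => y yh; apply/HV; split; [apply: mh|apply: Ph].
  move=> y z /HV [my Py] /HV [mz Pz]; apply/HV; split; [exact: mmul | exact: Pmul].
by have [] := (HV x).1 xV.
Qed.


Hypothesis Hcomm : forall a b, a \in h -> b \in h -> forall u, m u ->
  (a *m b - b *m a) *m u = 0 /\ u *m (a *m b - b *m a) = 0.

Lemma step1 v : m v -> forall a, a \in h -> forall u, m u ->
  (a *m v - v *m a) *m u = 0 /\ u *m (a *m v - v *m a) = 0.
Proof.
move: v; apply: m_ind.
- by move=> a _ u _; rewrite mulmx0 mul0mx subrr mul0mx mulmx0.
- move=> c x y Hx Hy a ha u mu.
  have E : a *m (c *: x + y) - (c *: x + y) *m a =
    c *: (a *m x - x *m a) + (a *m y - y *m a).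
    rewrite mulmxDr mulmxDl -scalemxAr -scalemxAl scalerBr.
    by rewrite opprD addrACA.
  have [Hx1 Hx2] := Hx a ha u mu; have [Hy1 Hy2] := Hy a ha u mu.
  rewrite E mulmxDl mulmxDr -scalemxAl -scalemxAr Hx1 Hx2 Hy1 Hy2.
  by rewrite scaler0 addr0.
- by move=> x hx a ha; apply: Hcomm.
- move=> x y mx my Hx Hy a ha u mu.
  have E : a *m (x *m y) - (x *m y) *m a =
    (a *m x - x *m a) *m y + x *m (a *m y - y *m a).
    by rewrite mulmxBl mulmxBr !mulmxA addrA subrK.
  have [Hx1 _] := Hx a ha (y *m u) (mmul _ _ my mu).
  have [Hy1 _] := Hy a ha u mu.
  have [_ Hx2] := Hx a ha u mu.
  have [_ Hy2] := Hy a ha (u *m x) (mmul _ _ mu mx).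
  rewrite E; move: Hx1 Hy1 Hx2 Hy2.
  move: (a *m x - x *m a) (a *m y - y *m a) => X Y Hx1 Hy1 Hx2 Hy2.
  rewrite mulmxDl mulmxDr -!mulmxA Hx1 Hy1 mulmx0 addr0; split => //.
  rewrite !mulmxA Hx2 mul0mx add0r.
  exact: Hy2.
Qed.

Lemma step2 a v w : a \in h -> m v -> m w ->
  a *m v *m w = v *m a *m w /\ w *m a *m v = w *m v *m a.
Proof.
move=> ha mv mw; have [H1 H2] := step1 v mv a ha w mw.
split; apply/eqP; rewrite -subr_eq0.
  by rewrite -mulmxBl H1.
by rewrite -!mulmxA -mulmxBr H2.
Qed.

Lemma step3 u : m u -> forall v w, m v -> m w -> u *m v *m w = v *m u *m w.
Proof.
move: u; apply: m_ind.
- by move=> v w _ _; rewrite !mul0mx ?mulmx0 ?mul0mx.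
- move=> c x y Hx Hy v w mv mw.
  rewrite !mulmxDl mulmxDr !mulmxDl -!scalemxAl -!scalemxAr -!scalemxAl.
  by rewrite Hx // Hy.
- by move=> a ha v w mv mw; have [] := step2 _ _ _ ha mv mw.
- move=> x y mx my Hx Hy v w mv mw.
  have E1 := Hy v w mv mw.
  have E2 := Hx v (y *m w) mv (mmul _ _ my mw).
  rewrite -!mulmxA in E1 E2 *.
  by rewrite E1 E2.
Qed.

Lemma step4 w : m w -> forall u v, m u -> m v -> u *m v *m w = u *m w *m v.
Proof.
move: w; apply: m_ind.
- by move=> u v _ _; rewrite !mulmx0 ?mul0mx ?mulmx0.
- move=> c x y Hx Hy u v mu mv.
  rewrite !mulmxDr !mulmxDl -!scalemxAr -!scalemxAl.
  by rewrite Hx // Hy.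
- by move=> a ha u v mu mv; have [] := step2 _ _ _ ha mv mu.
- move=> x y mx my Hx Hy u v mu mv.
  rewrite mulmxA Hx // (Hy (u *m x) v (mmul _ _ mu mx) mv).
  by rewrite !mulmxA.
Qed.

Lemma keyK y w z : m y -> m w -> m z -> y *m w *m z = z *m y *m w.
Proof. by move=> my mw mz; rewrite step4 // step3. Qed.

End Gen.

Theorem lemma3p3 (R : realType) (n : nat)
  (h : {vspace 'M[R[i]]_(n.*2.+2)}) (t : 'M[R[i]]_(n.*2.+2)) :
  lie_subalgebra h ->
  strictly_upper h ->
  heisenberg_iso n h ->
  spans_center h t ->
  (forall x, assoc_gen h x -> t *m x = 0 /\ x *m t = 0) ->
  forall x, prod_span (assoc_gen h) x ->
    center_of (unitize (assoc_gen h)) x.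
Proof.
move=> Hlie _ [Om [phi [_ _ [Hl _ Hin Hsurj Hbr]]]] [_ [_ tspan]] Ht x Hx.
have phi00 : phi 0 0 = 0.
  have E := Hl 1 0 0 0 0.
  rewrite scaler0 addr0 mulr0 addr0 scale1r in E.
  by move: E; rewrite -{1}[phi 0 0]addr0 => /addrI ->.
have Hcomm : forall a b, a \in h -> b \in h -> forall u, assoc_gen h u ->
  (a *m b - b *m a) *m u = 0 /\ u *m (a *m b - b *m a) = 0.
  move=> a b ha hb u mu.
  have : a *m b - b *m a \in <[t]>%VS.
    apply: tspan; split; first exact: Hlie.
    move=> y hy.
    have [w1 [t1 ->]] := Hsurj a ha.
    have [w2 [t2 ->]] := Hsurj b hb.
    have [w3 [t3 ->]] := Hsurj y hy.
    rewrite -Hbr -Hbr !mul0mx.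
    by rewrite (_ : (0 : 'M_(1,1)) 0 0 = 0) ?phi00 // mxE.
  case/vlineP => k ->.
  have [H1 H2] := Ht u mu.
  by rewrite -scalemxAl -scalemxAr H1 H2 scaler0.
have mx : assoc_gen h x.
  move=> W hW cW; apply: Hx => y z my mz; apply: (cW); [exact: (my W hW cW) | exact: (mz W hW cW)].
split.
  exists 0, x; split => //.
  rewrite (_ : 0%:M = 0) ?add0r //.
  by apply/matrixP => i j; rewrite !mxE mul0rn.
move=> a [c [z [mz ->]]].
rewrite mulmxDr mulmxDl mul_mx_scalar mul_scalar_mx; congr (_ + _).
have [V HV] : exists V : {vspace 'M[R[i]]_(n.*2.+2)},
    forall y, y \in V <-> y *m z = z *m y.
  apply: vspace_of_pred; first by rewrite mul0mx mulmx0.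
  move=> k y1 y2 E1 E2.
  by rewrite mulmxDl mulmxDr -scalemxAl -scalemxAr E1 E2.
apply/HV; apply: Hx => y w my mw; apply/HV.
by rewrite (@keyK _ _ h Hcomm y w z my mw mz) !mulmxA.
Qed.
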